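(* Let $\mathcal{X},\mathcal{Y}$ be finite, $p(X,Y)$ with $p(X)$ of full support, and $q(T|X)\in C(\mathcal{X},\mathcal{T})$. Then (i) $q_{\pi_{\mathcal{X}}}(Y,T)=q(Y,T)$, in particular $I_{q_{\pi_{\mathcal{X}}}}(Y;T)=I_q(Y;T)$; (ii) $I_{q_{\pi_{\mathcal{X}}}}(X;T)\le I_q(X;T)$, with equality if and only if $q_{\pi_{\mathcal{X}}}(T|X)=q(T|X)$.
   Context: $\mathcal{T}=\mathbb{N}$. The relation $x\sim_{\mathcal{X}}x'\iff p(Y|x)=p(Y|x')$ has partition $\{\mathcal{X}_j\}_j$ and projection $\pi_{\mathcal{X}}$. $q_{\pi_{\mathcal{X}}}(t|x):=\sum_j\delta_{x\in\mathcal{X}_j}\frac{\sum_{x'\in\mathcal{X}_j}q(t|x')p(x')}{p(\mathcal{X}_j)}$. For any channel $r(T|X)$, joints are $r(x,y,t)=p(x,y)r(t|x)$ and mutual informations are computed from them. *)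

(* Defs.v *)
From HB Require Import structures.
From mathcomp Require Import all_boot all_order all_algebra.
From mathcomp Require Import all_classical all_reals all_analysis.
Set Implicit Arguments. Unset Strict Implicit. Unset Printing Implicit Defensive.
Import Order.TTheory GRing.Theory Num.Theory.
Local Open Scope ring_scope.

Section Defs.
Variables (R : realType) (X Y : finType).

Definition is_joint_dist (p : X -> Y -> R) : Prop :=
  (forall x y, 0 <= p x y) /\ \sum_(x : X) \sum_(y : Y) p x y = 1.

Definition margX (p : X -> Y -> R) (x : X) : R := \sum_(y : Y) p x y.
Definition margY (p : X -> Y -> R) (y : Y) : R := \sum_(x : X) p x y.

Definition is_channel (r : X -> nat -> R) : Prop :=
  (forall x t, 0 <= r x t) /\
  (forall x, (\sum_(0 <= t <oo) (r x t)%:E)%E = 1%E).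

Definition simX (p : X -> Y -> R) (x x' : X) : bool :=
  [forall y, p x y / margX p x == p x' y / margX p x'].

Definition qpi (p : X -> Y -> R) (q : X -> nat -> R) (x : X) (t : nat) : R :=
  (\sum_(x' | simX p x x') q x' t * margX p x') /
  (\sum_(x' | simX p x x') margX p x').

Definition jointXT (p : X -> Y -> R) (r : X -> nat -> R) (x : X) (t : nat) : R :=
  margX p x * r x t.
Definition jointYT (p : X -> Y -> R) (r : X -> nat -> R) (y : Y) (t : nat) : R :=
  \sum_(x : X) p x y * r x t.

End Defs.

(* Mutual information I(A;T) of a joint j(a,t) on A x nat, whose A-marginal
   is pa (finite sum), with convention 0 log 0 = 0; natural logarithm. *)
Definition MI (R : realType) (A : finType) (pa : A -> R) (j : A -> nat -> R)
  : \bar R :=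
  (\sum_(0 <= t <oo)
     (\sum_(a : A) (if j a t == 0 then 0
                    else j a t * ln (j a t / (pa a * \sum_(a' : A) j a' t))))%:E)%E.

(* Main.v *)
Require Import Defs.
From HB Require Import structures.
From mathcomp Require Import all_boot all_order all_algebra.
From mathcomp Require Import all_classical all_reals all_analysis.
From mathcomp Require Import lra ring.
Import Order.TTheory GRing.Theory Num.Theory.
Local Open Scope ring_scope.

Section Pt.
Variable R : realType.

Lemma ln_le_sub1 {z : R} : 0 < z -> ln z <= z - 1.
Proof.
move=> z0; have := expR_ge1Dx (ln z); rewrite lnK ?posrE //.
by rewrite lerBrDl.
Qed.

Lemma ln_lt_sub1 {z : R} : 0 < z -> z != 1 -> ln z < z - 1.
Proof.
move=> z0 z1; have : ln z != 0 by rewrite ln_eq0.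
move/expR_gt1Dx; rewrite lnK ?posrE //.
by rewrite ltrBrDl.
Qed.

Lemma pt2 (u m J : R) : 0 <= u -> 0 <= m -> (m = 0 -> u = 0) -> (0 < u -> 0 < J) ->
  0 <= u * (ln (u / J) - ln (m / J)) - (u - m) /\
  (u * (ln (u / J) - ln (m / J)) - (u - m) = 0 -> u = m).
Proof.
move=> u0 m0 mu uJ.
have [->|upos] := eqVneq u 0.
  rewrite mul0r !sub0r opprK; split => // ->//.
have up : 0 < u by rewrite lt0r upos.
have mp : 0 < m.
  by rewrite lt0r m0 andbT; apply/eqP => /mu /eqP; rewrite (negbTE upos).
have Jp := uJ up.
have -> : ln (u / J) - ln (m / J) = - ln (m / u).
  rewrite !ln_div ?posrE //; lra.
have Hmu : u * (m / u) = m by rewrite mulrC divfK // gt_eqF.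
split.
  have := ln_le_sub1 (divr_gt0 mp up) => h.
  have : u * ln (m / u) <= u * (m / u - 1) by rewrite ler_pM2l.
  rewrite mulrBr Hmu mulr1 => h2; lra.
move=> e; apply/eqP; apply: contraT => ne.
have mu1 : m / u != 1.
  apply: contra ne => /eqP h; apply/eqP.
  by move: Hmu; rewrite h mulr1.
have := ln_lt_sub1 (divr_gt0 mp up) mu1 => h.
have : u * ln (m / u) < u * (m / u - 1) by rewrite ltr_pM2l.
rewrite mulrBr Hmu mulr1 => h2; lra.
Qed.
End Pt.

Section Main.
Variables (R : realType) (X Y : finType) (p : X -> Y -> R) (q : X -> nat -> R).
Hypothesis Hp : is_joint_dist p.
Hypothesis HP : forall x, 0 < margX p x.
Hypothesis Hq : is_channel q.

Local Notation P := (margX p).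
Local Notation sim := (simX p).
Local Notation S x := (\sum_(x' | simX p x x') margX p x').
Local Notation Q := (qpi p q).

Lemma sim_refl x : sim x x.
Proof. by apply/forallP => y. Qed.

Lemma sim_sym x x' : sim x x' = sim x' x.
Proof.
by apply/forallP/forallP => h y; move/eqP: (h y) => ->.
Qed.

Lemma sim_trans x x' x'' : sim x x' -> sim x' x'' -> sim x x''.
Proof.
move=> /forallP h1 /forallP h2; apply/forallP => y.
by move/eqP: (h1 y) => ->; exact: h2.
Qed.

Lemma sim_eq x x' z : sim x x' -> sim x z = sim x' z.
Proof.
move=> h; apply/idP/idP => h'.
  by apply: sim_trans h'; rewrite sim_sym.
exact: sim_trans h'.
Qed.

Lemma S_pos x : 0 < S x.
Proof.
rewrite (bigD1 x) ?sim_refl //=; apply: ltr_wpDr (HP x).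
by apply: sumr_ge0 => i _; apply: ltW.
Qed.

Lemma S_eq x x' : sim x x' -> S x = S x'.
Proof. by move=> h; apply: eq_bigl => z; rewrite (@sim_eq _ _ z h). Qed.

Lemma Q_eq x x' t : sim x x' -> Q x t = Q x' t.
Proof. by move=> h; rewrite /qpi; congr (_ / _); apply: eq_bigl => z; rewrite (@sim_eq _ _ z h). Qed.

Lemma KEY (f : X -> R) t : (forall x x', sim x x' -> f x = f x') ->
  \sum_x P x * f x * Q x t = \sum_x P x * f x * q x t.
Proof.
move=> hf.
transitivity (\sum_x \sum_(x' | sim x x') P x * f x * (q x' t * P x') / S x).
  apply: eq_bigr => x _; rewrite /qpi mulrA mulr_sumr mulr_suml.
  by apply: eq_bigr => i _; rewrite mulrA.
rewrite (exchange_big_dep predT) //=.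
apply: eq_bigr => x' _.
transitivity (\sum_(x | sim x x') P x * (f x' * (q x' t * P x') / S x')).
  apply: eq_bigr => x h; rewrite (hf _ _ h) (S_eq _ _ h); by rewrite !mulrA.
rewrite -mulr_suml.
have -> : \sum_(x | sim x x') P x = S x'.
  by apply: eq_bigl => z; rewrite sim_sym.
have := S_pos x'; move: (S x') => s s0.
field; by rewrite gt_eqF.
Qed.


Lemma sumP1 : \sum_x P x = 1.
Proof. by case: Hp. Qed.

Lemma p_ge0 x y : 0 <= p x y.
Proof. by case: Hp. Qed.

Lemma q_ge0 x t : 0 <= q x t.
Proof. by case: Hq. Qed.

Lemma P_le1 x : P x <= 1.
Proof.
rewrite -sumP1 (bigD1 x) //= lerDl; apply: sumr_ge0 => i _; exact: ltW.
Qed.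

Lemma Q_ge0 x t : 0 <= Q x t.
Proof.
rewrite /qpi divr_ge0 //; apply: sumr_ge0 => i _.
  by rewrite mulr_ge0 ?q_ge0 // ltW.
exact: ltW.
Qed.

Lemma Q0 x t : Q x t = 0 -> q x t = 0.
Proof.
rewrite /qpi => /eqP; rewrite mulf_eq0 invr_eq0 (gt_eqF (S_pos x)) orbF => /eqP h.
have := psumr_eq0P _ h (sim_refl x) => /(_ _)/eqP.
rewrite mulf_eq0 (gt_eqF (HP x)) orbF => H; apply/eqP; apply: H.
by move=> i _; rewrite mulr_ge0 ?q_ge0 // ltW.
Qed.

Lemma partI y t : jointYT p Q y t = jointYT p q y t.
Proof.
rewrite /jointYT.
have e : forall r : X -> nat -> R, \sum_x p x y * r x t = \sum_x P x * (p x y / P x) * r x t.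
  move=> r; apply: eq_bigr => x _; congr (_ * _).
  by rewrite mulrC divfK // gt_eqF.
rewrite !e; apply: KEY => x x' /forallP /(_ y) /eqP //.
Qed.

Definition J t := \sum_x P x * q x t.

Lemma JQ t : \sum_x P x * Q x t = J t.
Proof.
have := @KEY (fun=> 1) t (fun _ _ _ => erefl).
by under eq_bigr do rewrite mulr1; under [in RHS]eq_bigr do rewrite mulr1.
Qed.

Lemma le_term (r : X -> nat -> R) x t : (forall x, 0 <= r x t) ->
  P x * r x t <= \sum_x P x * r x t.
Proof.
move=> h; rewrite (bigD1 x) //= lerDl; apply: sumr_ge0 => i _.
by rewrite mulr_ge0 // ltW.
Qed.

Definition A (r : X -> nat -> R) t := \sum_a P a * (r a t * ln (r a t / J t)).

Lemma termE (r : X -> nat -> R) t : (forall x, 0 <= r x t) ->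
  \sum_x P x * r x t = J t ->
  \sum_(a : X) (if jointXT p r a t == 0 then 0
                 else jointXT p r a t * ln (jointXT p r a t / (P a * \sum_(a' : X) jointXT p r a' t)))
  = A r t.
Proof.
move=> r0 hJ; rewrite /A /jointXT hJ; apply: eq_bigr => a _.
have Pa : P a != 0 by rewrite gt_eqF.
case: ifP => [/eqP|_].
  by move/eqP; rewrite mulf_eq0 (negbTE Pa) /= => /eqP ->; rewrite !mul0r mulr0.
by rewrite -mulf_div divff // mul1r mulrA.
Qed.

Lemma A_ge0 (r : X -> nat -> R) t : (forall x, 0 <= r x t) ->
  \sum_x P x * r x t = J t -> 0 <= A r t.
Proof.
move=> r0 hJ.
have J0 : 0 <= J t by rewrite -hJ; apply: sumr_ge0 => i _; rewrite mulr_ge0 // ltW.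
have lJJ : ln (J t / J t) = 0.
  have [->|nz] := eqVneq (J t) 0; first by rewrite mul0r ln0.
  by rewrite divff // ln1.
have h : forall x, P x * (r x t - J t) <= P x * (r x t * ln (r x t / J t)).
  move=> x; rewrite ler_pM2l //.
  have le := le_term r x t r0; rewrite hJ in le.
  have [] := @pt2 R (r x t) (J t) (J t) (r0 x) J0 _ _.
  - move=> e; move: le; rewrite e => le; apply/eqP.
    by rewrite eq_le r0 andbT -(pmulr_rle0 _ (HP x)).
  - move=> u0; apply: lt_le_trans le; exact: mulr_gt0.
  by rewrite lJJ subr0 => hh _; lra.
apply: le_trans (ler_sum _ (fun x _ => h x)).
rewrite (eq_bigr (fun i => P i * r i t - P i * J t)); last by move=> i _; rewrite mulrBr.
by rewrite sumrB hJ -mulr_suml sumP1 mul1r subrr.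
Qed.


Definition E x t := q x t * (ln (q x t / J t) - ln (Q x t / J t)) - (q x t - Q x t).

Lemma D_eq t : A q t - A Q t = \sum_x P x * E x t.
Proof.
have h1 := @KEY (fun x => ln (Q x t / J t)) t (fun x x' h => congr1 (fun z => ln (z / J t)) (Q_eq _ _ t h)).
have h2 := JQ t.
rewrite (eq_bigr (fun x => P x * (q x t * ln (q x t / J t)) - P x * ln (Q x t / J t) * q x t
   - (P x * q x t - P x * Q x t))); last by move=> x _; rewrite /E; ring.
rewrite !sumrB -h1 h2 /J subrr subr0 /A; congr (_ - _).
by apply: eq_bigr => x _; ring.
Qed.

Lemma E_ge0 x t : 0 <= E x t /\ (E x t = 0 -> q x t = Q x t).
Proof.
apply: pt2; [exact: q_ge0|exact: Q_ge0|exact: Q0|].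
move=> qp; apply: lt_le_trans (le_term q x t (fun x => q_ge0 x t)).
exact: mulr_gt0.
Qed.

Lemma A_bound t : A q t <= \sum_x (- (P x * ln (P x))) * q x t.
Proof.
apply: ler_sum => x _.
have [->|nz] := eqVneq (q x t) 0; first by rewrite !(mul0r, mulr0).
have qp : 0 < q x t by rewrite lt0r nz q_ge0.
have le := le_term q x t (fun x => q_ge0 x t).
have Jp : 0 < J t by apply: lt_le_trans le; exact: mulr_gt0.
have : ln (q x t / J t) <= ln ((P x)^-1).
  rewrite ler_ln ?posrE; last 2 first.
  - exact: divr_gt0.
  - by rewrite invr_gt0.
  by rewrite ler_pdivrMr // [_^-1 * _]mulrC ler_pdivlMr // mulrC.
rewrite lnV ?posrE // => h.
rewrite mulNr -mulrN -mulrA ler_pM2l //.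
by rewrite mulrN -mulNr mulrC ler_pM2r.
Qed.


Lemma MIE (r : X -> nat -> R) : (forall x t, 0 <= r x t) ->
  (forall t, \sum_x P x * r x t = J t) ->
  MI P (jointXT p r) = (\sum_(0 <= t <oo) (A r t)%:E)%E.
Proof.
move=> r0 hJ; rewrite /MI; apply: eq_eseriesr => t _; congr (_%:E).
exact: termE.
Qed.

Lemma D_ge0 t : 0 <= A q t - A Q t.
Proof.
rewrite D_eq; apply: sumr_ge0 => x _; apply: mulr_ge0; [exact: ltW|exact: (E_ge0 x t).1].
Qed.

Lemma MIq_fin : (\sum_(0 <= t <oo) (A q t)%:E < +oo)%E.
Proof.
have c0 : forall x, 0 <= - (P x * ln (P x)).
  move=> x; rewrite oppr_ge0 pmulr_rle0 //; exact: ln_le0 (P_le1 x).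
apply: (le_lt_trans (y := (\sum_(0 <= t <oo) (\sum_x (- (P x * ln (P x))) * q x t)%:E)%E)).
  apply: lee_nneseries => [i _ _|n _]; rewrite lee_fin.
    by apply: A_ge0 => // x; exact: q_ge0.
  exact: A_bound.
under eq_eseriesr do rewrite -sumEFin.
rewrite nneseries_sum; last first.
  by move=> i j _; rewrite lee_fin mulr_ge0 ?q_ge0.
under eq_bigr do (under eq_eseriesr do rewrite EFinM; rewrite nneseriesZl;
  [|by move=> i _; rewrite lee_fin q_ge0]).
under eq_bigr do (case: Hq => _ ->; rewrite mule1).
by rewrite sumEFin ltry.
Qed.

Lemma main_sec :
  ((forall y t, jointYT p (qpi p q) y t = jointYT p q y t) /\
   MI (margY p) (jointYT p (qpi p q)) = MI (margY p) (jointYT p q)) /\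
  ((MI (margX p) (jointXT p (qpi p q)) <= MI (margX p) (jointXT p q))%E /\
   (MI (margX p) (jointXT p (qpi p q)) = MI (margX p) (jointXT p q) <->
    (forall x t, qpi p q x t = q x t))).
Proof.
split.
  split; first exact: partI.
  have -> // : jointYT p Q = jointYT p q.
  by apply/funext => y; apply/funext => t; exact: partI.
rewrite (MIE Q) ?(MIE q) //; try exact: q_ge0; try exact: Q_ge0; try exact: JQ.
have le : (\sum_(0 <= t <oo) (A Q t)%:E <= \sum_(0 <= t <oo) (A q t)%:E)%E.
  apply: lee_nneseries => [i _ _|n _]; rewrite lee_fin.
    by apply: A_ge0 => [x|]; [exact: Q_ge0|exact: JQ].
  by rewrite -subr_ge0 D_ge0.
split => //; split; last first.
  move=> h; have -> // : qpi p q = q.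
  by apply/funext => x; apply/funext => t; exact: h.
move=> heq x t.
set s := (\sum_(0 <= t <oo) (A Q t)%:E)%E in heq le *.
set d := (\sum_(0 <= t <oo) (A q t - A Q t)%:E)%E.
have Dsum : (\sum_(0 <= t <oo) (A q t)%:E = s + d)%E.
  rewrite /s /d -nneseriesD; last 2 first.
  - by move=> i _ _; rewrite lee_fin; apply: A_ge0 => [y|]; [exact: Q_ge0|exact: JQ].
  - by move=> i _ _; rewrite lee_fin D_ge0.
  by apply: eq_eseriesr => i _; rewrite -EFinD addrC subrK.
have sfin : s \is a fin_num.
  rewrite ge0_fin_numE; last first.
    apply: nneseries_ge0 => i _ _; rewrite lee_fin.
    by apply: A_ge0 => [y|]; [exact: Q_ge0|exact: JQ].
  by apply: le_lt_trans le MIq_fin.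
have d0 : d = 0%E.
  have -> : d = (d + s - s)%E by rewrite addeK.
  by rewrite [(d + s)%E]addeC -Dsum -heq subee.
have Dt : A q t - A Q t = 0.
  move: d0; rewrite /d (nneseriesD1 (n := t)) //; last first.
    by move=> k _; rewrite lee_fin D_ge0.
  move/eqP; rewrite padde_eq0 ?lee_fin ?D_ge0 //; last first.
    by apply: nneseries_ge0 => k _ _; rewrite lee_fin D_ge0.
  by case/andP => /eqP [] ->.
move: Dt; rewrite D_eq => Dt.
have h0 : forall i, true -> 0 <= P i * E i t.
  move=> i _; apply: mulr_ge0; [exact: ltW|exact: (E_ge0 i t).1].
have := @psumr_eq0P _ _ _ _ h0 Dt x isT => /eqP.
rewrite mulf_eq0 (gt_eqF (HP x)) /= => /eqP H.
by case: (E_ge0 x t) => _ /(_ H) ->.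
Qed.

End Main.

Theorem lemma4 (R : realType) (X Y : finType) (p : X -> Y -> R)
  (q : X -> nat -> R) :
  is_joint_dist p ->
  (forall x, 0 < margX p x) ->
  is_channel q ->
  ((forall y t, jointYT p (qpi p q) y t = jointYT p q y t) /\
   MI (margY p) (jointYT p (qpi p q)) = MI (margY p) (jointYT p q)) /\
  ((MI (margX p) (jointXT p (qpi p q)) <= MI (margX p) (jointXT p q))%E /\
   (MI (margX p) (jointXT p (qpi p q)) = MI (margX p) (jointXT p q) <->
    (forall x t, qpi p q x t = q x t))).
Proof. move=> Hp HP Hq; exact: main_sec. Qed.
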